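(* Let $X$ be a separable real Banach space, $a\in\mathbb{R}$, and $\varphi:X\to[a,\infty)$ a continuous convex function which is not constant on any line (i.e. there are no $x,v\in X$ with $v\ne0$ such that $t\mapsto\varphi(x+tv)$ is constant on $\mathbb{R}$). Then $\varphi$ is essentially directionally coercive: there exists $\xi\in X^*$ such that $\lim_{t\to\infty}\big(\varphi(x+tv)-\langle\xi,x+tv\rangle\big)=\infty$ for every $x\in X$ and every $v\in X\setminus\{0\}$. *)

(* Defs.v *)
From Stdlib Require Import Reals.
Open Scope R_scope.

Record BanachSpace : Type := {
  bs_carrier :> Type;
  bs_zero : bs_carrier;
  bs_add : bs_carrier -> bs_carrier -> bs_carrier;
  bs_opp : bs_carrier -> bs_carrier;
  bs_scal : R -> bs_carrier -> bs_carrier;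
  bs_norm : bs_carrier -> R;
  bs_addA : forall x y z, bs_add x (bs_add y z) = bs_add (bs_add x y) z;
  bs_addC : forall x y, bs_add x y = bs_add y x;
  bs_add0 : forall x, bs_add x bs_zero = x;
  bs_addN : forall x, bs_add x (bs_opp x) = bs_zero;
  bs_scal1 : forall x, bs_scal 1 x = x;
  bs_scalA : forall a b x, bs_scal a (bs_scal b x) = bs_scal (a * b) x;
  bs_scalDr : forall a x y, bs_scal a (bs_add x y) = bs_add (bs_scal a x) (bs_scal a y);
  bs_scalDl : forall a b x, bs_scal (a + b) x = bs_add (bs_scal a x) (bs_scal b x);
  bs_norm_eq0 : forall x, bs_norm x = 0 -> x = bs_zero;
  bs_normZ : forall a x, bs_norm (bs_scal a x) = Rabs a * bs_norm x;
  bs_normD : forall x y, bs_norm (bs_add x y) <= bs_norm x + bs_norm y;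
  bs_complete : forall u : nat -> bs_carrier,
    (forall eps, eps > 0 -> exists N, forall m n, (m >= N)%nat -> (n >= N)%nat ->
        bs_norm (bs_add (u m) (bs_opp (u n))) < eps) ->
    exists l, forall eps, eps > 0 -> exists N, forall n, (n >= N)%nat ->
        bs_norm (bs_add (u n) (bs_opp l)) < eps
}.

Arguments bs_zero {_}.
Arguments bs_add {_} _ _.
Arguments bs_opp {_} _.
Arguments bs_scal {_} _ _.
Arguments bs_norm {_} _.

Definition bs_sub {X : BanachSpace} (x y : X) : X := bs_add x (bs_opp y).

Definition separable (X : BanachSpace) : Prop :=
  exists d : nat -> X, forall (x : X) eps, eps > 0 ->
    exists n, bs_norm (bs_sub x (d n)) < eps.

Definition continuous_on_X {X : BanachSpace} (f : X -> R) : Prop :=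
  forall (x : X) eps, eps > 0 -> exists delta, delta > 0 /\
    forall y : X, bs_norm (bs_sub y x) < delta -> Rabs (f y - f x) < eps.

Definition convex_fun {X : BanachSpace} (f : X -> R) : Prop :=
  forall (x y : X) t, 0 <= t <= 1 ->
    f (bs_add (bs_scal t x) (bs_scal (1 - t) y)) <= t * f x + (1 - t) * f y.

Definition not_constant_on_lines {X : BanachSpace} (f : X -> R) : Prop :=
  ~ exists (x v : X), v <> bs_zero /\
      forall t s : R, f (bs_add x (bs_scal t v)) = f (bs_add x (bs_scal s v)).

Definition in_dual {X : BanachSpace} (xi : X -> R) : Prop :=
  (forall x y : X, xi (bs_add x y) = xi x + xi y) /\
  (forall (a : R) (x : X), xi (bs_scal a x) = a * xi x) /\
  continuous_on_X xi.

Definition tends_to_infty (g : R -> R) : Prop :=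
  forall M : R, exists T : R, forall t, t >= T -> g t > M.

Definition essentially_directionally_coercive {X : BanachSpace} (f : X -> R) : Prop :=
  exists xi : X -> R, in_dual xi /\
    forall x v : X, v <> bs_zero ->
      tends_to_infty (fun t => f (bs_add x (bs_scal t v)) - xi (bs_add x (bs_scal t v))).

(* Main.v *)
Require Import Defs.
From Stdlib Require Import Reals Lra Lia List ClassicalEpsilon Classical.
Open Scope R_scope.

Lemma add0l {X : BanachSpace} (x : X) : bs_add bs_zero x = x.
Proof. rewrite bs_addC; apply bs_add0. Qed.

Lemma scal0 {X : BanachSpace} (x : X) : bs_scal 0 x = bs_zero.
Proof.
  assert (H : bs_scal 0 x = bs_add (bs_scal 0 x) (bs_scal 0 x)).
  { rewrite <- bs_scalDl. f_equal. ring. }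
  transitivity (bs_add (bs_scal 0 x) (bs_add (bs_scal 0 x) (bs_opp (bs_scal 0 x)))).
  - rewrite bs_addN, bs_add0; auto.
  - rewrite bs_addA, <- H, bs_addN; auto.
Qed.

Lemma scalz {X : BanachSpace} (a : R) : bs_scal a (@bs_zero X) = bs_zero.
Proof. rewrite <- (scal0 bs_zero), bs_scalA, Rmult_0_r. reflexivity. Qed.

Lemma opp_scal {X : BanachSpace} (x : X) : bs_opp x = bs_scal (-1) x.
Proof.
  assert (H : bs_add (bs_scal (-1) x) x = bs_zero).
  { rewrite <- (bs_scal1 _ x) at 2. rewrite <- bs_scalDl.
    replace (-1+1) with 0 by ring. apply scal0. }
  rewrite <- (add0l (bs_opp x)), <- H, <- bs_addA, bs_addN, bs_add0. reflexivity.
Qed.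

Inductive vexp : Type :=
 | VAtom (n : nat) | VZero | VAdd (a b : vexp) | VScal (r : R) (a : vexp) | VOpp (a : vexp).

Fixpoint vden {X : BanachSpace} (env : list X) (e : vexp) : X :=
  match e with
  | VAtom n => nth n env bs_zero
  | VZero => bs_zero
  | VAdd a b => bs_add (vden env a) (vden env b)
  | VScal r a => bs_scal r (vden env a)
  | VOpp a => bs_opp (vden env a)
  end.

Fixpoint lc {X : BanachSpace} (env : list X) (c : nat -> R) : X :=
  match env with
  | nil => bs_zero
  | a :: l => bs_add (bs_scal (c O) a) (lc l (fun k => c (S k)))
  end.

Fixpoint coef (e : vexp) (k : nat) : R :=
  match e with
  | VAtom n => if Nat.eqb n k then 1 else 0
  | VZero => 0
  | VAdd a b => coef a k + coef b k
  | VScal r a => r * coef a k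
  | VOpp a => - coef a k
  end.

Lemma lc_ext {X : BanachSpace} (env : list X) c1 c2 :
  (forall k, c1 k = c2 k) -> lc env c1 = lc env c2.
Proof.
  revert c1 c2; induction env as [|a l IH]; intros c1 c2 H; simpl; auto.
  rewrite H. f_equal. apply IH. intros; apply H.
Qed.

Lemma add_swap4 {X : BanachSpace} (a b c d : X) :
  bs_add (bs_add a b) (bs_add c d) = bs_add (bs_add a c) (bs_add b d).
Proof.
  rewrite <- !bs_addA. f_equal. rewrite !bs_addA. f_equal. apply bs_addC.
Qed.

Lemma lc_add {X : BanachSpace} (env : list X) c1 c2 :
  lc env (fun k => c1 k + c2 k) = bs_add (lc env c1) (lc env c2).
Proof.
  revert c1 c2; induction env as [|a l IH]; intros c1 c2; simpl.
  - rewrite bs_add0; auto.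
  - rewrite bs_scalDl, IH. apply add_swap4.
Qed.

Lemma lc_scal {X : BanachSpace} (env : list X) r c :
  lc env (fun k => r * c k) = bs_scal r (lc env c).
Proof.
  revert c; induction env as [|a l IH]; intros c; simpl.
  - rewrite scalz; auto.
  - rewrite bs_scalDr, IH, bs_scalA. reflexivity.
Qed.

Lemma lc_zero {X : BanachSpace} (env : list X) : lc env (fun _ => 0) = bs_zero.
Proof.
  induction env as [|a l IH]; simpl; auto. rewrite IH, scal0, bs_add0; auto.
Qed.

Lemma lc_atom {X : BanachSpace} (env : list X) n :
  lc env (fun k => if Nat.eqb n k then 1 else 0) = nth n env bs_zero.
Proof.
  revert n; induction env as [|a l IH]; intros n; simpl.
  - destruct n; auto.
  - destruct n as [|n]; simpl.
    + rewrite bs_scal1, lc_zero, bs_add0; auto.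
    + rewrite scal0, add0l. apply IH.
Qed.

Lemma vden_lc {X : BanachSpace} (env : list X) e : vden env e = lc env (coef e).
Proof.
  induction e; simpl.
  - symmetry; apply lc_atom.
  - symmetry; apply lc_zero.
  - rewrite IHe1, IHe2, <- lc_add; auto.
  - rewrite IHe, <- lc_scal; auto.
  - rewrite IHe, opp_scal, <- lc_scal. apply lc_ext. intros; ring.
Qed.

Ltac vlookup t env :=
  match env with
  | t :: _ => constr:(O)
  | _ :: ?r => let n := vlookup t r in constr:(S n)
  end.

Ltac vreify env t :=
  match t with
  | bs_add ?a ?b => let ea := vreify env a in let eb := vreify env b in constr:(VAdd ea eb)
  | bs_sub ?a ?b => let ea := vreify env a in let eb := vreify env b in constr:(VAdd ea (VOpp eb))
  | bs_scal ?r ?a => let ea := vreify env a in constr:(VScal r ea)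
  | bs_opp ?a => let ea := vreify env a in constr:(VOpp ea)
  | bs_zero => constr:(VZero)
  | _ => let n := vlookup t env in constr:(VAtom n)
  end.

Lemma vden_eq {X : BanachSpace} (env : list X) e1 e2 :
  lc env (coef e1) = lc env (coef e2) -> vden env e1 = vden env e2.
Proof. rewrite !vden_lc; auto. Qed.

(* leaves coefficient equalities *)
Ltac vec env :=
  match goal with
  | |- ?L = ?Rr =>
    let e1 := vreify env L in let e2 := vreify env Rr in
    change (vden env e1 = vden env e2); apply vden_eq;
    cbn [lc coef Nat.eqb];
    repeat (match goal with
      | |- bs_add _ _ = bs_add _ _ => apply f_equal2
      | |- bs_scal _ _ = bs_scal _ _ => apply f_equal2; [|reflexivity]
      | |- bs_zero = bs_zero => reflexivity end)
  end.

Goal forall (X : BanachSpace) (x y v : X) (t : R),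
  bs_sub (bs_add x (bs_scal t v)) (bs_add y (bs_scal t v)) = bs_sub x y.
Proof. intros. vec (x :: y :: v :: nil); ring. Qed.

Lemma norm_zero {X : BanachSpace} : bs_norm (@bs_zero X) = 0.
Proof. rewrite <- (scal0 (@bs_zero X)), bs_normZ, Rabs_R0; ring. Qed.

Lemma norm_opp {X : BanachSpace} (x : X) : bs_norm (bs_scal (-1) x) = bs_norm x.
Proof. rewrite bs_normZ, Rabs_left by lra; ring. Qed.

Lemma norm_ge0 {X : BanachSpace} (x : X) : 0 <= bs_norm x.
Proof.
  assert (H := bs_normD _ x (bs_scal (-1) x)).
  replace (bs_add x (bs_scal (-1) x)) with (@bs_zero X) in H by (vec (x::nil); ring).
  rewrite norm_zero, norm_opp in H. lra.
Qed.

Lemma norm_sub_sym {X : BanachSpace} (a b : X) : bs_norm (bs_sub a b) = bs_norm (bs_sub b a).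
Proof.
  replace (bs_sub a b) with (bs_scal (-1) (bs_sub b a)) by (vec (a::b::nil); ring).
  apply norm_opp.
Qed.

Definition is_glb (P : R -> Prop) (m : R) :=
  (forall y, P y -> m <= y) /\ (forall m', (forall y, P y -> m' <= y) -> m' <= m).

Definition glb_of (P : R -> Prop) : R := epsilon (inhabits 0) (is_glb P).

Lemma glb_spec (P : R -> Prop) (lb : R) :
  (exists y, P y) -> (forall y, P y -> lb <= y) -> is_glb P (glb_of P).
Proof.
  intros [y0 Hy0] Hlb. unfold glb_of. apply epsilon_spec.
  destruct (completeness (fun z => P (- z))) as [m [Hm1 Hm2]].
  - exists (- lb). intros z Hz. apply Hlb in Hz. lra.
  - exists (- y0). rewrite Ropp_involutive. auto.
  - exists (- m). split.
    + intros y Hy. assert (Hm := Hm1 (- y)). cbv beta in Hm. rewrite Ropp_involutive in Hm.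
      apply Hm in Hy. lra.
    + intros m' Hm'. assert (- m' >= m).
      { apply Rle_ge, Hm2. intros z Hz. apply Hm' in Hz. lra. }
      lra.
Qed.

Lemma glb_lb (P : R -> Prop) (lb : R) y :
  (forall y, P y -> lb <= y) -> P y -> glb_of P <= y.
Proof. intros Hlb Hy. apply (proj1 (glb_spec P lb (ex_intro _ y Hy) Hlb)). auto. Qed.

Lemma glb_gl (P : R -> Prop) (lb : R) m :
  (exists y, P y) -> (forall y, P y -> lb <= y) -> (forall y, P y -> m <= y) -> m <= glb_of P.
Proof. intros Hne Hlb Hm. apply (proj2 (glb_spec P lb Hne Hlb)). auto. Qed.

Definition subl {X : BanachSpace} (p : X -> R) : Prop :=
  p bs_zero = 0 /\
  (forall u w, p (bs_add u w) <= p u + p w) /\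
  (forall l w, l > 0 -> p (bs_scal l w) = l * p w).

Lemma subl_hom {X : BanachSpace} (p : X -> R) l w :
  subl p -> l >= 0 -> p (bs_scal l w) = l * p w.
Proof.
  intros [H0 [_ H2]] Hl. destruct (Rle_lt_or_eq_dec 0 l) as [Hl'|Hl']; try lra.
  - apply H2; lra.
  - subst. rewrite scal0, H0. ring.
Qed.

Lemma subl_odd {X : BanachSpace} (p : X -> R) w :
  subl p -> 0 <= p w + p (bs_scal (-1) w).
Proof.
  intros Hp. destruct Hp as [H0 [H1 H2]].
  rewrite <- H0. replace (@bs_zero X) with (bs_add w (bs_scal (-1) w)) by (vec (w::nil); ring).
  apply H1.
Qed.

Definition Qset {X : BanachSpace} (p : X -> R) (e w : X) : R -> Prop :=
  fun r => exists t, r = p (bs_add w (bs_scal (- t) e)) + t * p e.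

Definition Qop {X : BanachSpace} (p : X -> R) (e w : X) : R := glb_of (Qset p e w).

Lemma Qset_lb {X : BanachSpace} (p : X -> R) e w :
  subl p -> forall r, Qset p e w r -> - p (bs_scal (-1) w) <= r.
Proof.
  intros Hp r [t ->]. pose proof Hp as [H0 [H1 H2]].
  destruct (Rle_or_lt 0 t) as [Ht|Ht].
  - assert (A := H1 (bs_add w (bs_scal (- t) e)) (bs_scal t e)).
    replace (bs_add (bs_add w (bs_scal (- t) e)) (bs_scal t e)) with w in A
      by (vec (w::e::nil); ring).
    rewrite (subl_hom p t e Hp) in A by lra.
    pose proof (subl_odd p w Hp). lra.
  - assert (A := H1 (bs_scal (-1) w) (bs_add w (bs_scal (- t) e))).
    replace (bs_add (bs_scal (-1) w) (bs_add w (bs_scal (- t) e))) with (bs_scal (-t) e) in A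
      by (vec (w::e::nil); ring).
    rewrite (subl_hom p (-t) e Hp) in A by lra. lra.
Qed.

Lemma Q_le {X : BanachSpace} (p : X -> R) e w t :
  subl p -> Qop p e w <= p (bs_add w (bs_scal (- t) e)) + t * p e.
Proof.
  intros Hp. unfold Qop. apply (glb_lb _ (- p (bs_scal (-1) w))).
  - apply Qset_lb; auto.
  - exists t; auto.
Qed.

Lemma Q_ge {X : BanachSpace} (p : X -> R) e w m :
  subl p -> (forall t, m <= p (bs_add w (bs_scal (- t) e)) + t * p e) -> m <= Qop p e w.
Proof.
  intros Hp Hm. unfold Qop. apply (glb_gl _ (- p (bs_scal (-1) w))).
  - exists (p (bs_add w (bs_scal (- 0) e)) + 0 * p e). exists 0; auto.
  - apply Qset_lb; auto.
  - intros y [t ->]. auto.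
Qed.

Lemma Q_lower {X : BanachSpace} (p : X -> R) e w :
  subl p -> - p (bs_scal (-1) w) <= Qop p e w.
Proof. intros Hp. apply Q_ge; auto. intros t. apply (Qset_lb p e w); auto. exists t; auto. Qed.

Lemma Q_below {X : BanachSpace} (p : X -> R) e w :
  subl p -> Qop p e w <= p w.
Proof.
  intros Hp. eapply Rle_trans. apply (Q_le p e w 0 Hp).
  replace (bs_add w (bs_scal (- 0) e)) with w by (vec (w::e::nil); ring). lra.
Qed.

Lemma Q_e {X : BanachSpace} (p : X -> R) e :
  subl p -> Qop p e e + Qop p e (bs_scal (-1) e) <= 0.
Proof.
  intros Hp. pose proof (Q_le p e e 1 Hp) as A. pose proof (Q_le p e (bs_scal (-1) e) (-1) Hp) as B.
  replace (bs_add e (bs_scal (Ropp 1) e)) with (@bs_zero X) in A by (vec (e::nil); ring).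
  replace (bs_add (bs_scal (-1) e) (bs_scal (- -1) e)) with (@bs_zero X) in B by (vec (e::nil); ring).
  destruct Hp as [H0 _]. rewrite H0 in A, B. lra.
Qed.

Lemma Q_subl {X : BanachSpace} (p : X -> R) e :
  subl p -> subl (Qop p e).
Proof.
  intros Hp. pose proof Hp as [H0 [H1 H2]]. split; [|split].
  - apply Rle_antisym.
    + eapply Rle_trans. apply (Q_below p e); auto. lra.
    + eapply Rle_trans; [|apply (Q_lower p e); auto]. rewrite scalz, H0. lra.
  - intros u w.
    assert (forall t2, Qop p e (bs_add u w) - (p (bs_add w (bs_scal (- t2) e)) + t2 * p e) <= Qop p e u).
    { intros t2. apply Q_ge; auto. intros t1.
      assert (A := Q_le p e (bs_add u w) (t1 + t2) Hp).
      assert (B := H1 (bs_add u (bs_scal (- t1) e)) (bs_add w (bs_scal (- t2) e))).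
      replace (bs_add (bs_add u (bs_scal (- t1) e)) (bs_add w (bs_scal (- t2) e)))
        with (bs_add (bs_add u w) (bs_scal (- (t1 + t2)) e)) in B by (vec (u::w::e::nil); ring).
      lra. }
    assert (Qop p e (bs_add u w) - Qop p e u <= Qop p e w).
    { apply Q_ge; auto. intros t2. specialize (H t2). lra. }
    lra.
  - intros l w Hl. apply Rle_antisym.
    + assert (Qop p e (bs_scal l w) / l <= Qop p e w).
      { apply Q_ge; auto. intros t.
        assert (A := Q_le p e (bs_scal l w) (l * t) Hp).
        replace (bs_add (bs_scal l w) (bs_scal (- (l * t)) e))
          with (bs_scal l (bs_add w (bs_scal (- t) e))) in A by (vec (w::e::nil); ring).
        rewrite H2 in A by auto.
        apply (Rmult_le_reg_l l); auto. unfold Rdiv. rewrite <- Rmult_assoc, Rinv_r_simpl_m by lra.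
        lra. }
      unfold Rdiv in H. apply (Rmult_le_compat_l l) in H; try lra.
      rewrite <- Rmult_assoc, Rinv_r_simpl_m in H by lra. lra.
    + apply Q_ge; auto. intros t.
      assert (A := Q_le p e w (t / l) Hp).
      replace (bs_add (bs_scal l w) (bs_scal (- t) e))
        with (bs_scal l (bs_add w (bs_scal (- (t / l)) e))) by (vec (w::e::nil); field; lra).
      rewrite H2 by auto.
      apply (Rmult_le_compat_l l) in A; try lra.
      replace (l * (p (bs_add w (bs_scal (- (t / l)) e)) + t / l * p e))
        with (l * p (bs_add w (bs_scal (- (t / l)) e)) + t * p e) in A by (field; lra).
      lra.
Qed.

Fixpoint pseq {X : BanachSpace} (p : X -> R) (d : nat -> X) (n : nat) : X -> R :=
  match n with O => p | S n => Qop (pseq p d n) (d n) end.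

Lemma pseq_subl {X : BanachSpace} (p : X -> R) d n : subl p -> subl (pseq p d n).
Proof. intros Hp; induction n; simpl; auto. apply Q_subl; auto. Qed.

Lemma pseq_mono {X : BanachSpace} (p : X -> R) d n m w :
  subl p -> (n <= m)%nat -> pseq p d m w <= pseq p d n w.
Proof.
  intros Hp Hnm. induction Hnm; [lra|]. simpl. eapply Rle_trans; [|apply IHHnm].
  apply Q_below, pseq_subl; auto.
Qed.

Lemma pseq_lower {X : BanachSpace} (p : X -> R) d n w :
  subl p -> - p (bs_scal (-1) w) <= pseq p d n w.
Proof.
  intros Hp. destruct n as [|n].
  - simpl. pose proof (subl_odd p w Hp). lra.
  - simpl. eapply Rle_trans; [|apply Q_lower, pseq_subl; auto].
    pose proof (pseq_mono p d 0 n (bs_scal (-1) w) Hp ltac:(lia)). simpl in H. lra.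
Qed.

Lemma pseq_d {X : BanachSpace} (p : X -> R) d n k :
  subl p -> (S k <= n)%nat -> pseq p d n (d k) + pseq p d n (bs_scal (-1) (d k)) = 0.
Proof.
  intros Hp Hn. apply Rle_antisym.
  - pose proof (pseq_mono p d (S k) n (d k) Hp Hn).
    pose proof (pseq_mono p d (S k) n (bs_scal (-1) (d k)) Hp Hn).
    pose proof (Q_e (pseq p d k) (d k) (pseq_subl p d k Hp)). simpl in *. lra.
  - apply subl_odd, pseq_subl; auto.
Qed.

Definition xiof {X : BanachSpace} (p : X -> R) d (w : X) : R :=
  glb_of (fun r => exists n, r = pseq p d n w).

Lemma xi_le {X : BanachSpace} (p : X -> R) d w n :
  subl p -> xiof p d w <= pseq p d n w.
Proof.
  intros Hp. apply (glb_lb _ (- p (bs_scal (-1) w))).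
  - intros y [m ->]. apply pseq_lower; auto.
  - exists n; auto.
Qed.

Lemma xi_ge {X : BanachSpace} (p : X -> R) d w m :
  subl p -> (forall n, m <= pseq p d n w) -> m <= xiof p d w.
Proof.
  intros Hp H. apply (glb_gl _ (- p (bs_scal (-1) w))).
  - exists (pseq p d 0 w), 0%nat; auto.
  - intros y [k ->]. apply pseq_lower; auto.
  - intros y [k ->]. auto.
Qed.

Lemma xi_subadd {X : BanachSpace} (p : X -> R) d u w :
  subl p -> xiof p d (bs_add u w) <= xiof p d u + xiof p d w.
Proof.
  intros Hp.
  assert (forall n1, xiof p d (bs_add u w) - pseq p d n1 u <= xiof p d w).
  { intros n1. apply xi_ge; auto. intros n2.
    pose proof (xi_le p d (bs_add u w) (max n1 n2) Hp).
    destruct (pseq_subl p d (max n1 n2) Hp) as [_ [H1 _]].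
    pose proof (H1 u w).
    pose proof (pseq_mono p d n1 (max n1 n2) u Hp ltac:(lia)).
    pose proof (pseq_mono p d n2 (max n1 n2) w Hp ltac:(lia)). lra. }
  assert (xiof p d (bs_add u w) - xiof p d w <= xiof p d u).
  { apply xi_ge; auto. intros n. specialize (H n). lra. }
  lra.
Qed.

Lemma xi_zero {X : BanachSpace} (p : X -> R) d :
  subl p -> xiof p d bs_zero = 0.
Proof.
  intros Hp. apply Rle_antisym.
  - pose proof (xi_le p d bs_zero 0 Hp). destruct Hp as [H0 _]. simpl in H. lra.
  - apply xi_ge; auto. intros n. destruct (pseq_subl p d n Hp) as [H0 _]. lra.
Qed.

Lemma xi_hom {X : BanachSpace} (p : X -> R) d l w :
  subl p -> l > 0 -> xiof p d (bs_scal l w) = l * xiof p d w.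
Proof.
  intros Hp Hl. apply Rle_antisym.
  - assert (xiof p d (bs_scal l w) / l <= xiof p d w).
    { apply xi_ge; auto. intros n. pose proof (xi_le p d (bs_scal l w) n Hp).
      destruct (pseq_subl p d n Hp) as [_ [_ H2]]. rewrite H2 in H by auto.
      apply (Rmult_le_reg_l l); auto. unfold Rdiv. rewrite <- Rmult_assoc, Rinv_r_simpl_m by lra.
      lra. }
    unfold Rdiv in H. apply (Rmult_le_compat_l l) in H; try lra.
    rewrite <- Rmult_assoc, Rinv_r_simpl_m in H by lra. lra.
  - apply xi_ge; auto. intros n. pose proof (xi_le p d w n Hp).
    destruct (pseq_subl p d n Hp) as [_ [_ H2]]. rewrite H2 by auto.
    apply Rmult_le_compat_l; lra.
Qed.

Lemma xi_dk {X : BanachSpace} (p : X -> R) d k :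
  subl p -> xiof p d (d k) + xiof p d (bs_scal (-1) (d k)) = 0.
Proof.
  intros Hp. apply Rle_antisym.
  - pose proof (xi_le p d (d k) (S k) Hp).
    pose proof (xi_le p d (bs_scal (-1) (d k)) (S k) Hp).
    pose proof (pseq_d p d (S k) k Hp ltac:(lia)). lra.
  - rewrite <- (xi_zero p d Hp).
    replace (@bs_zero X) with (bs_add (d k) (bs_scal (-1) (d k))) at 1 by (vec (d k :: nil); ring).
    apply xi_subadd; auto.
Qed.

Lemma xi_lip {X : BanachSpace} (p : X -> R) d L u w :
  subl p -> (forall z, p z <= L * bs_norm z) ->
  xiof p d u - xiof p d w <= L * bs_norm (bs_sub u w).
Proof.
  intros Hp HL. pose proof (xi_subadd p d w (bs_sub u w) Hp).
  replace (bs_add w (bs_sub u w)) with u in H by (vec (u::w::nil); ring).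
  pose proof (xi_le p d (bs_sub u w) 0 Hp). simpl in H0. pose proof (HL (bs_sub u w)). lra.
Qed.

Lemma HB {X : BanachSpace} (d : nat -> X) (p : X -> R) (L : R) :
  (forall (x : X) eps, eps > 0 -> exists n, bs_norm (bs_sub x (d n)) < eps) ->
  subl p -> 0 <= L -> (forall w, p w <= L * bs_norm w) ->
  exists xi : X -> R,
    (forall u w, xi (bs_add u w) = xi u + xi w) /\
    (forall a w, xi (bs_scal a w) = a * xi w) /\
    (forall w, xi w <= p w).
Proof.
  intros Hd Hp HL0 HL. exists (xiof p d).
  assert (Hodd : forall w, xiof p d w + xiof p d (bs_scal (-1) w) = 0).
  { intros w. apply Rle_antisym.
    - destruct (Rle_or_lt (xiof p d w + xiof p d (bs_scal (-1) w)) 0) as [G|G]; auto.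
      set (g := xiof p d w + xiof p d (bs_scal (-1) w)) in *.
      destruct (Hd w (g / (2 * L + 1))) as [k Hk].
      { apply Rdiv_lt_0_compat; lra. }
      pose proof (xi_lip p d L w (d k) Hp HL).
      pose proof (xi_lip p d L (bs_scal (-1) w) (bs_scal (-1) (d k)) Hp HL).
      replace (bs_sub (bs_scal (-1) w) (bs_scal (-1) (d k))) with (bs_scal (-1) (bs_sub w (d k))) in H0
        by (vec (w :: d k :: nil); ring).
      rewrite norm_opp in H0. pose proof (xi_dk p d k Hp).
      assert (2 * L * bs_norm (bs_sub w (d k)) <= 2 * L * (g / (2 * L + 1))).
      { apply Rmult_le_compat_l; lra. }
      assert (2 * L * (g / (2 * L + 1)) < g).
      { apply (Rmult_lt_reg_r (2 * L + 1)); [lra|]. unfold Rdiv.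
        replace (2 * L * (g * / (2 * L + 1)) * (2 * L + 1)) with (2 * L * g) by (field; lra). nra. }
      unfold g in *. lra.
    - rewrite <- (xi_zero p d Hp).
      replace (@bs_zero X) with (bs_add w (bs_scal (-1) w)) at 1 by (vec (w :: nil); ring).
      apply xi_subadd; auto. }
  split; [|split].
  - intros u w. apply Rle_antisym. apply xi_subadd; auto.
    pose proof (xi_subadd p d (bs_scal (-1) u) (bs_scal (-1) w) Hp).
    replace (bs_add (bs_scal (-1) u) (bs_scal (-1) w)) with (bs_scal (-1) (bs_add u w)) in H
      by (vec (u :: w :: nil); ring).
    pose proof (Hodd u). pose proof (Hodd w). pose proof (Hodd (bs_add u w)). lra.
  - intros a w. destruct (Rtotal_order a 0) as [Ha|[Ha|Ha]].
    + replace (bs_scal a w) with (bs_scal (-1) (bs_scal (-a) w)) by (vec (w :: nil); ring).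
      pose proof (Hodd (bs_scal (-a) w)). rewrite xi_hom in * by (auto; lra). lra.
    + subst. rewrite scal0, xi_zero; auto. ring.
    + apply xi_hom; auto.
  - intros w. apply (xi_le p d w 0 Hp).
Qed.

Definition qq {X : BanachSpace} (phi : X -> R) (y w : X) (t : R) : R :=
  (phi (bs_add y (bs_scal t w)) - phi y) / t.

Lemma qq_lower {X : BanachSpace} (phi : X -> R) y w t :
  convex_fun phi -> t > 0 -> phi y - phi (bs_add y (bs_scal (-1) w)) <= qq phi y w t.
Proof.
  intros Hc Ht. set (l := / (1 + t)).
  assert (Hl : 0 < l < 1).
  { unfold l. split. apply Rinv_0_lt_compat; lra.
    rewrite <- Rinv_1. apply Rinv_lt_contravar; lra. }
  pose proof (Hc (bs_add y (bs_scal t w)) (bs_add y (bs_scal (-1) w)) l ltac:(lra)).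
  replace (bs_add (bs_scal l (bs_add y (bs_scal t w))) (bs_scal (1 - l) (bs_add y (bs_scal (-1) w))))
    with y in H by (vec (y :: w :: nil); unfold l; field; lra).
  unfold qq. apply (Rmult_le_reg_r t); auto. unfold Rdiv.
  rewrite Rmult_assoc, Rinv_l, Rmult_1_r by lra.
  apply (Rmult_le_reg_l l); [lra|].
  assert (E1 : l * (1 + t) = 1) by (unfold l; field; lra).
  assert (E2 : 1 - l = t * l) by lra.
  rewrite E2 in H.
  set (A := phi y) in *. set (B := phi (bs_add y (bs_scal (-1) w))) in *.
  set (C := phi (bs_add y (bs_scal t w))) in *.
  assert (E3 : l * ((A - B) * t) - l * (C - A) = A * (l * (1 + t)) - (l * C + t * l * B)) by ring.
  rewrite E1 in E3. lra.
Qed.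

Lemma qq_mono {X : BanachSpace} (phi : X -> R) y w s t :
  convex_fun phi -> 0 < s -> s <= t -> qq phi y w s <= qq phi y w t.
Proof.
  intros Hc Hs Hst.
  pose proof (Hc (bs_add y (bs_scal t w)) y (s / t)).
  replace (bs_add (bs_scal (s / t) (bs_add y (bs_scal t w))) (bs_scal (1 - s / t) y))
    with (bs_add y (bs_scal s w)) in H by (vec (y :: w :: nil); field; lra).
  assert (0 <= s / t <= 1).
  { split. apply Rlt_le, Rdiv_lt_0_compat; lra.
    apply (Rmult_le_reg_l t); [lra|]. unfold Rdiv. rewrite Rmult_1_r, <- Rmult_assoc, Rinv_r_simpl_m; lra. }
  specialize (H H0). unfold qq.
  replace (s / t) with (s * / t) in H by reflexivity.
  apply (Rmult_le_reg_l s); auto.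
  replace (s * ((phi (bs_add y (bs_scal s w)) - phi y) / s)) with (phi (bs_add y (bs_scal s w)) - phi y)
    by (field; lra).
  replace (s * ((phi (bs_add y (bs_scal t w)) - phi y) / t))
    with (s * / t * phi (bs_add y (bs_scal t w)) - s * / t * phi y) by (field; lra).
  lra.
Qed.

Definition qset {X : BanachSpace} (phi : X -> R) (y w : X) : R -> Prop :=
  fun r => exists t, t > 0 /\ r = qq phi y w t.

Definition dder {X : BanachSpace} (phi : X -> R) (y w : X) : R := glb_of (qset phi y w).

Lemma dder_le {X : BanachSpace} (phi : X -> R) y w t :
  convex_fun phi -> t > 0 -> dder phi y w <= qq phi y w t.
Proof.
  intros Hc Ht. apply (glb_lb _ (phi y - phi (bs_add y (bs_scal (-1) w)))).
  - intros r [s [Hs ->]]. apply qq_lower; auto.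
  - exists t; auto.
Qed.

Lemma dder_ge {X : BanachSpace} (phi : X -> R) y w m :
  convex_fun phi -> (forall t, t > 0 -> m <= qq phi y w t) -> m <= dder phi y w.
Proof.
  intros Hc H. apply (glb_gl _ (phi y - phi (bs_add y (bs_scal (-1) w)))).
  - exists (qq phi y w 1), 1; split; auto; lra.
  - intros r [s [Hs ->]]. apply qq_lower; auto.
  - intros r [s [Hs ->]]. auto.
Qed.

Lemma dder_subl {X : BanachSpace} (phi : X -> R) y :
  convex_fun phi -> subl (dder phi y).
Proof.
  intros Hc. split; [|split].
  - assert (E : forall t, t > 0 -> qq phi y bs_zero t = 0).
    { intros t Ht. unfold qq. rewrite scalz, bs_add0. field; lra. }
    apply Rle_antisym.
    + rewrite <- (E 1) by lra. apply dder_le; auto; lra.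
    + apply dder_ge; auto. intros t Ht. rewrite E; auto; lra.
  - intros u w.
    assert (forall t1 t2, t1 > 0 -> t2 > 0 -> dder phi y (bs_add u w) <= qq phi y u t1 + qq phi y w t2).
    { intros t1 t2 H1 H2. set (tau := Rmin t1 t2 / 2).
      assert (Htau : 0 < tau) by (unfold tau; pose proof (Rmin_glb_lt t1 t2 0 H1 H2); lra).
      assert (tau <= t1 / 2) by (unfold tau; pose proof (Rmin_l t1 t2); lra).
      assert (tau <= t2 / 2) by (unfold tau; pose proof (Rmin_r t1 t2); lra).
      eapply Rle_trans. apply (dder_le _ _ _ tau); auto.
      pose proof (Hc (bs_add y (bs_scal (2 * tau) u)) (bs_add y (bs_scal (2 * tau) w)) (1/2) ltac:(lra)).
      replace (bs_add (bs_scal (1/2) (bs_add y (bs_scal (2 * tau) u)))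
                 (bs_scal (1 - 1/2) (bs_add y (bs_scal (2 * tau) w))))
        with (bs_add y (bs_scal tau (bs_add u w))) in H3 by (vec (y :: u :: w :: nil); field).
      pose proof (qq_mono phi y u (2 * tau) t1 Hc ltac:(lra) ltac:(lra)).
      pose proof (qq_mono phi y w (2 * tau) t2 Hc ltac:(lra) ltac:(lra)).
      assert (qq phi y (bs_add u w) tau <= qq phi y u (2 * tau) + qq phi y w (2 * tau)).
      { unfold qq. apply (Rmult_le_reg_l (2 * tau)); [lra|].
        replace (2 * tau * ((phi (bs_add y (bs_scal tau (bs_add u w))) - phi y) / tau))
          with (2 * (phi (bs_add y (bs_scal tau (bs_add u w))) - phi y)) by (field; lra).
        replace (2 * tau * ((phi (bs_add y (bs_scal (2 * tau) u)) - phi y) / (2 * tau) +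
                 (phi (bs_add y (bs_scal (2 * tau) w)) - phi y) / (2 * tau)))
          with (phi (bs_add y (bs_scal (2 * tau) u)) - phi y + (phi (bs_add y (bs_scal (2 * tau) w)) - phi y))
          by (field; lra).
        lra. }
      lra. }
    assert (forall t2, t2 > 0 -> dder phi y (bs_add u w) - qq phi y w t2 <= dder phi y u).
    { intros t2 H2. apply dder_ge; auto. intros t1 H1. specialize (H t1 t2 H1 H2). lra. }
    assert (dder phi y (bs_add u w) - dder phi y u <= dder phi y w).
    { apply dder_ge; auto. intros t2 H2. specialize (H0 t2 H2). lra. }
    lra.
  - intros l w Hl.
    assert (E : forall t, t > 0 -> qq phi y (bs_scal l w) t = l * qq phi y w (t * l)).
    { intros t Ht. unfold qq. rewrite bs_scalA. field. split; lra. }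
    apply Rle_antisym.
    + assert (dder phi y (bs_scal l w) / l <= dder phi y w).
      { apply dder_ge; auto. intros t Ht.
        pose proof (dder_le phi y (bs_scal l w) (t / l) Hc ltac:(apply Rdiv_lt_0_compat; lra)).
        rewrite E in H by (apply Rdiv_lt_0_compat; lra).
        replace (t / l * l) with t in H by (field; lra).
        apply (Rmult_le_reg_l l); [lra|].
        replace (l * (dder phi y (bs_scal l w) / l)) with (dder phi y (bs_scal l w)) by (field; lra).
        lra. }
      apply (Rmult_le_compat_l l) in H; try lra.
      replace (l * (dder phi y (bs_scal l w) / l)) with (dder phi y (bs_scal l w)) in H by (field; lra).
      lra.
    + apply dder_ge; auto. intros t Ht. rewrite E by auto.
      apply Rmult_le_compat_l; try lra. apply dder_le; auto. nra.
Qed.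

Lemma dder_bound {X : BanachSpace} (phi : X -> R) y :
  convex_fun phi -> continuous_on_X phi ->
  exists L, 0 <= L /\ forall w, dder phi y w <= L * bs_norm w.
Proof.
  intros Hc Hcont. destruct (Hcont y 1 ltac:(lra)) as [delta [Hdel Hy]].
  exists (2 / delta). split. apply Rlt_le, Rdiv_lt_0_compat; lra.
  intros w. destruct (Req_dec (bs_norm w) 0) as [E|E].
  - apply bs_norm_eq0 in E. subst w. destruct (dder_subl phi y Hc) as [H0 _].
    rewrite H0, norm_zero. lra.
  - pose proof (norm_ge0 w). set (t := delta / (2 * bs_norm w)).
    assert (Ht : t > 0) by (unfold t; apply Rdiv_lt_0_compat; lra).
    eapply Rle_trans. apply (dder_le _ _ _ t); auto.
    assert (Hn : bs_norm (bs_sub (bs_add y (bs_scal t w)) y) < delta).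
    { replace (bs_sub (bs_add y (bs_scal t w)) y) with (bs_scal t w) by (vec (y :: w :: nil); ring).
      rewrite bs_normZ, Rabs_right by lra. unfold t. field_simplify; lra. }
    apply Hy in Hn. apply Rabs_def2 in Hn. unfold qq.
    apply (Rmult_le_reg_l t); auto.
    replace (t * ((phi (bs_add y (bs_scal t w)) - phi y) / t)) with (phi (bs_add y (bs_scal t w)) - phi y)
      by (field; lra).
    replace (t * (2 / delta * bs_norm w)) with 1 by (unfold t; field; lra). lra.
Qed.

Lemma subgrad {X : BanachSpace} (d : nat -> X) (phi : X -> R) (y : X) :
  (forall (x : X) eps, eps > 0 -> exists n, bs_norm (bs_sub x (d n)) < eps) ->
  convex_fun phi -> continuous_on_X phi ->
  exists (xi : X -> R) (L : R), 0 <= L /\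
    (forall u w, xi (bs_add u w) = xi u + xi w) /\
    (forall a w, xi (bs_scal a w) = a * xi w) /\
    (forall w, Rabs (xi w) <= L * bs_norm w) /\
    (forall w, phi y + xi w <= phi (bs_add y w)).
Proof.
  intros Hd Hc Hcont. destruct (dder_bound phi y Hc Hcont) as [L [HL0 HL]].
  destruct (HB d (dder phi y) L Hd (dder_subl phi y Hc) HL0 HL) as [xi [Ha [Hh Hle]]].
  exists xi, L. repeat split; auto.
  - intros w. apply Rabs_le. split.
    + pose proof (Hle (bs_scal (-1) w)). pose proof (HL (bs_scal (-1) w)). rewrite Hh, norm_opp in *. lra.
    + pose proof (Hle w). pose proof (HL w). lra.
  - intros w. pose proof (Hle w). pose proof (dder_le phi y w 1 Hc ltac:(lra)).
    unfold qq in H0. rewrite bs_scal1 in H0. replace ((phi (bs_add y w) - phi y) / 1) with (phi (bs_add y w) - phi y) in H0 by field.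
    lra.
Qed.

Lemma line_convex {X : BanachSpace} (phi : X -> R) x v p q l :
  convex_fun phi -> 0 <= l <= 1 ->
  phi (bs_add x (bs_scal (l * p + (1 - l) * q) v)) <=
    l * phi (bs_add x (bs_scal p v)) + (1 - l) * phi (bs_add x (bs_scal q v)).
Proof.
  intros Hc Hl. pose proof (Hc (bs_add x (bs_scal p v)) (bs_add x (bs_scal q v)) l Hl).
  replace (bs_add (bs_scal l (bs_add x (bs_scal p v))) (bs_scal (1 - l) (bs_add x (bs_scal q v))))
    with (bs_add x (bs_scal (l * p + (1 - l) * q) v)) in H by (vec (x :: v :: nil); ring).
  auto.
Qed.

Lemma tends_of_incr (h : R -> R) a b :
  (forall p q l, 0 <= l <= 1 -> h (l * p + (1 - l) * q) <= l * h p + (1 - l) * h q) ->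
  a < b -> h a < h b -> tends_to_infty h.
Proof.
  intros Hc Hab Hh M. set (D := h b - h a).
  exists (b + (Rabs (M - h b) + 1) * (b - a) / D).
  intros t Ht.
  assert (HD : D > 0) by (unfold D; lra).
  assert (Hq : 0 < (Rabs (M - h b) + 1) * (b - a) / D).
  { apply Rdiv_lt_0_compat; auto. pose proof (Rabs_pos (M - h b)). nra. }
  set (l := (t - b) / (t - a)).
  assert (Hl : 0 <= l <= 1).
  { unfold l. split. apply Rmult_le_pos; [lra|]. apply Rlt_le, Rinv_0_lt_compat; lra.
    apply (Rmult_le_reg_r (t - a)); [lra|]. unfold Rdiv. rewrite Rmult_assoc, Rinv_l; lra. }
  pose proof (Hc a t l Hl).
  replace (l * a + (1 - l) * t) with b in H by (unfold l; field; lra).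
  assert (E : (t - a) * h b <= (t - b) * h a + (b - a) * h t).
  { replace (1 - l) with ((b - a) / (t - a)) in H by (unfold l; field; lra).
    apply (Rmult_le_compat_l (t - a)) in H; [|lra].
    replace ((t - a) * (l * h a + (b - a) / (t - a) * h t)) with ((t - b) * h a + (b - a) * h t) in H
      by (unfold l; field; lra). lra. }
  assert (E2 : (t - b) * D >= (Rabs (M - h b) + 1) * (b - a)).
  { assert ((Rabs (M - h b) + 1) * (b - a) / D <= t - b) by lra.
    apply Rle_ge. apply (Rmult_le_compat_r D) in H0; [|lra].
    replace ((Rabs (M - h b) + 1) * (b - a) / D * D) with ((Rabs (M - h b) + 1) * (b - a)) in H0
      by (field; lra). lra. }
  assert (E3 : (b - a) * h t >= (b - a) * (h b + Rabs (M - h b) + 1)).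
  { unfold D in E2. nra. }
  assert (h t >= h b + Rabs (M - h b) + 1).
  { apply Rle_ge. apply (Rmult_le_reg_l (b - a)); lra. }
  pose proof (Rle_abs (M - h b)). lra.
Qed.

Lemma transfer {X : BanachSpace} (phi : X -> R) x v y s t :
  convex_fun phi -> continuous_on_X phi ->
  (forall tau, 0 <= tau -> phi (bs_add x (bs_scal tau v)) - tau * s <= phi x) ->
  0 <= t -> phi (bs_add y (bs_scal t v)) <= phi y + t * s.
Proof.
  intros Hc Hcont Hx Ht.
  destruct (Req_dec t 0) as [E|Ht'].
  { subst. rewrite scal0, bs_add0. lra. }
  apply le_epsilon. intros eps Heps.
  destruct (Hcont y (eps / 2) ltac:(lra)) as [delta [Hdel Hy]].
  set (Dv := Rabs (phi x - phi y)). set (N := bs_norm (bs_sub y x)).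
  assert (HN : 0 <= N) by apply norm_ge0.
  assert (HDv : 0 <= Dv) by apply Rabs_pos.
  set (l := Rmin (1/2) (Rmin (eps / 2 / (1 + Dv)) (delta / (2 * (1 + N))))).
  assert (Hl1 : l <= 1/2) by apply Rmin_l.
  assert (Hl2 : l <= eps / 2 / (1 + Dv)) by (eapply Rle_trans; [apply Rmin_r|apply Rmin_l]).
  assert (Hl3 : l <= delta / (2 * (1 + N))) by (eapply Rle_trans; [apply Rmin_r|apply Rmin_r]).
  assert (Hl0 : 0 < l).
  { unfold l. repeat apply Rmin_glb_lt; try lra; apply Rdiv_lt_0_compat; lra. }
  set (c := l / (1 - l)). set (tau := t / l).
  set (A := bs_add y (bs_scal c (bs_sub y x))). set (B := bs_add x (bs_scal tau v)).
  pose proof (Hc B A l ltac:(lra)) as HC.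
  replace (bs_add (bs_scal l B) (bs_scal (1 - l) A)) with (bs_add y (bs_scal t v)) in HC
    by (unfold A, B, c, tau; vec (x :: y :: v :: nil); field; lra).
  assert (HB : phi B <= phi x + tau * s).
  { pose proof (Hx tau ltac:(unfold tau; apply Rmult_le_pos; [lra|]; apply Rlt_le, Rinv_0_lt_compat; lra)).
    unfold B; lra. }
  assert (HA : phi A < phi y + eps / 2).
  { assert (bs_norm (bs_sub A y) < delta).
    { replace (bs_sub A y) with (bs_scal c (bs_sub y x)) by (unfold A; vec (x :: y :: nil); ring).
      rewrite bs_normZ. fold N.
      assert (Hc0 : 0 <= c) by (unfold c; apply Rmult_le_pos; [lra|]; apply Rlt_le, Rinv_0_lt_compat; lra).
      rewrite Rabs_right by lra.
      assert (c <= 2 * l).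
      { unfold c. apply (Rmult_le_reg_r (1 - l)); [lra|]. unfold Rdiv.
        rewrite Rmult_assoc, Rinv_l, Rmult_1_r by lra. nra. }
      assert (2 * l * (1 + N) <= delta).
      { apply (Rmult_le_compat_r (2 * (1 + N))) in Hl3; [|lra].
        replace (delta / (2 * (1 + N)) * (2 * (1 + N))) with delta in Hl3 by (field; lra). lra. }
      nra. }
    apply Hy in H. apply Rabs_def2 in H. lra. }
  assert (Hlt : l * tau = t) by (unfold tau; field; lra).
  assert (l * Dv <= eps / 2).
  { apply (Rmult_le_compat_r (1 + Dv)) in Hl2; [|lra].
    replace (eps / 2 / (1 + Dv) * (1 + Dv)) with (eps / 2) in Hl2 by (field; lra). nra. }
  pose proof (Rle_abs (phi x - phi y)). fold Dv in H0.
  assert (l * (phi x - phi y) <= l * Dv) by (apply Rmult_le_compat_l; lra).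
  assert (HC2 : phi (bs_add y (bs_scal t v)) <= l * (phi x + tau * s) + (1 - l) * (phi y + eps / 2)).
  { apply (Rmult_le_compat_l l) in HB; [|lra]. apply Rlt_le in HA.
    apply (Rmult_le_compat_l (1 - l)) in HA; lra. }
  assert (l * (phi x + tau * s) + (1 - l) * (phi y + eps / 2) =
          phi y + t * s + l * (phi x - phi y) + (1 - l) * (eps / 2)).
  { rewrite <- Hlt. ring. }
  nra.
Qed.

Lemma density_eq {X : BanachSpace} (phi : X -> R) (d : nat -> X) v s :
  (forall (x : X) eps, eps > 0 -> exists n, bs_norm (bs_sub x (d n)) < eps) ->
  continuous_on_X phi ->
  (forall m t, 0 <= t -> phi (bs_add (d m) (bs_scal t v)) = phi (d m) + t * s) ->
  forall y t, 0 <= t -> phi (bs_add y (bs_scal t v)) = phi y + t * s.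
Proof.
  intros Hd Hcont Hm y t Ht.
  assert (forall eps, eps > 0 -> Rabs (phi (bs_add y (bs_scal t v)) - (phi y + t * s)) < 2 * eps).
  { intros eps Heps.
    destruct (Hcont y eps Heps) as [d1 [Hd1 H1]].
    destruct (Hcont (bs_add y (bs_scal t v)) eps Heps) as [d2 [Hd2 H2]].
    destruct (Hd y (Rmin d1 d2) ltac:(apply Rmin_glb_lt; lra)) as [m Hmn].
    rewrite norm_sub_sym in Hmn.
    assert (bs_norm (bs_sub (d m) y) < d1) by (pose proof (Rmin_l d1 d2); lra).
    assert (bs_norm (bs_sub (bs_add (d m) (bs_scal t v)) (bs_add y (bs_scal t v))) < d2).
    { replace (bs_sub (bs_add (d m) (bs_scal t v)) (bs_add y (bs_scal t v))) with (bs_sub (d m) y)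
        by (vec (d m :: y :: v :: nil); ring). pose proof (Rmin_r d1 d2); lra. }
    apply H1 in H. apply H2 in H0. rewrite Hm in H0 by auto.
    apply Rabs_def2 in H. apply Rabs_def2 in H0. apply Rabs_def1; lra. }
  destruct (Req_dec (phi (bs_add y (bs_scal t v)) - (phi y + t * s)) 0) as [E|E]; [lra|].
  exfalso. specialize (H (Rabs (phi (bs_add y (bs_scal t v)) - (phi y + t * s)) / 2)).
  assert (0 < Rabs (phi (bs_add y (bs_scal t v)) - (phi y + t * s))) by (apply Rabs_pos_lt; auto).
  specialize (H ltac:(lra)). lra.
Qed.
From Coquelicot Require Import Coquelicot.
Open Scope R_scope.

Lemma geom_half : is_series (fun n => (/2)^n) 2.
Proof.
  assert (E : / (1 - /2) = 2) by field.
  assert (H : Rabs (/2) < 1) by (rewrite Rabs_right; lra).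
  pose proof (is_series_geom (/2) H) as H0. rewrite E in H0. exact H0.
Qed.

Lemma ex_geom_C (C : R) : ex_series (fun n => (/2)^n * C).
Proof. apply ex_series_scal_r. exists 2. apply geom_half. Qed.

Lemma Series_geom_C (C : R) : Series (fun n => (/2)^n * C) = 2 * C.
Proof. rewrite Series_scal_r, (is_series_unique (pow (/2)) 2 geom_half). ring. Qed.

Lemma pow_half_pos n : 0 < (/2)^n.
Proof. apply pow_lt. lra. Qed.

Lemma ex_bounded (a : nat -> R) (C : R) :
  (forall n, Rabs (a n) <= (/2)^n * C) -> ex_series (fun n => Rabs (a n)) /\ ex_series a.
Proof.
  intros H. assert (ex_series (fun n => Rabs (a n))).
  { apply (ex_series_le (K := R_AbsRing) (V := R_CompleteNormedModule) _ (fun n => (/2)^n * C)); [|apply ex_geom_C].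
    intros n. change (norm (Rabs (a n))) with (Rabs (Rabs (a n))). rewrite Rabs_Rabsolu. auto. }
  split; auto. apply ex_series_Rabs; auto.
Qed.

Lemma series_bound (a : nat -> R) (C : R) :
  (forall n, Rabs (a n) <= (/2)^n * C) -> Rabs (Series a) <= 2 * C.
Proof.
  intros H. destruct (ex_bounded a C H) as [E1 E2].
  eapply Rle_trans. apply Series_Rabs; auto.
  rewrite <- Series_geom_C. apply Series_le; [|apply ex_geom_C].
  intros n; split; auto. apply Rabs_pos.
Qed.

Lemma term_le_series (b : nat -> R) m :
  (forall n, 0 <= b n) -> ex_series b -> b m <= Series b.
Proof.
  intros Hb Hex. rewrite (Series_incr_n b (S m)) by (auto; lia). simpl Init.Nat.pred.
  assert (b m <= sum_f_R0 b m).
  { destruct m. simpl; lra. simpl. pose proof (cond_pos_sum b m Hb). lra. }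
  assert (0 <= Series (fun k => b (S m + k)%nat)).
  { rewrite <- (Rmult_0_l (Series (fun k => b (S m + k)%nat))), <- Series_scal_l.
    apply Series_le. intros n; split; [lra|]. rewrite Rmult_0_l. auto.
    apply (ex_series_incr_n b (S m)) in Hex. auto. }
  lra.
Qed.

Definition xsum {X : BanachSpace} (eta : nat -> X -> R) (w : X) : R :=
  / 2 * Series (fun m => (/2)^m * eta m w).

Lemma xsum_props {X : BanachSpace} (eta : nat -> X -> R) (K : R) :
  0 <= K ->
  (forall m u w, eta m (bs_add u w) = eta m u + eta m w) ->
  (forall m a w, eta m (bs_scal a w) = a * eta m w) ->
  (forall m w, Rabs (eta m w) <= K * bs_norm w) ->
  (forall u w, xsum eta (bs_add u w) = xsum eta u + xsum eta w) /\
  (forall a w, xsum eta (bs_scal a w) = a * xsum eta w) /\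
  (forall w, Rabs (xsum eta w) <= K * bs_norm w) /\
  (forall v s, (forall m, eta m v <= s) -> xsum eta v = s -> forall m, eta m v = s).
Proof.
  intros HK Ha Hh Hb.
  assert (Hbt : forall w n, Rabs ((/2)^n * eta n w) <= (/2)^n * (K * bs_norm w)).
  { intros w n. rewrite Rabs_mult, Rabs_right by (apply Rle_ge, Rlt_le, pow_half_pos).
    apply Rmult_le_compat_l; auto. apply Rlt_le, pow_half_pos. }
  assert (Hex : forall w, ex_series (fun n => (/2)^n * eta n w)).
  { intros w. apply (ex_bounded _ (K * bs_norm w)), Hbt. }
  split; [|split; [|split]].
  - intros u w. unfold xsum. rewrite <- Rmult_plus_distr_l, <- Series_plus by auto.
    f_equal. apply Series_ext. intros n. rewrite Ha. ring.
  - intros a w. unfold xsum.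
    assert (E : Series (fun n => (/2)^n * eta n (bs_scal a w)) = a * Series (fun n => (/2)^n * eta n w)).
    { rewrite <- Series_scal_l. apply Series_ext. intros n. rewrite Hh. ring. }
    rewrite E. ring.
  - intros w. unfold xsum. rewrite Rabs_mult, Rabs_right by lra.
    pose proof (series_bound _ _ (Hbt w)). lra.
  - intros v s Hs Hx m.
    set (b := fun n => (/2)^n * (s - eta n v)).
    assert (Hb0 : forall n, 0 <= b n).
    { intros n. unfold b. apply Rmult_le_pos. apply Rlt_le, pow_half_pos. specialize (Hs n). lra. }
    assert (Hexb : ex_series b).
    { assert (E1 : ex_series (fun n => (/2)^n * s - (/2)^n * eta n v)).
      { apply (ex_series_minus (V := R_NormedModule) (fun n => (/2)^n * s) (fun n => (/2)^n * eta n v)).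
        apply ex_geom_C. auto. }
      refine (ex_series_ext _ _ _ E1). intros n; unfold b. change ((/ 2) ^ n * s - (/ 2) ^ n * eta n v = (/ 2) ^ n * (s - eta n v)); ring. }
    assert (Series b = 0).
    { unfold b. rewrite (Series_ext _ (fun n => (/2)^n * s - (/2)^n * eta n v)) by (intros; ring).
      rewrite Series_minus by (auto; apply ex_geom_C). rewrite Series_geom_C.
      unfold xsum in Hx. lra. }
    pose proof (term_le_series b m Hb0 Hexb). pose proof (Hb0 m). unfold b in *.
    assert ((/2)^m * (s - eta m v) = 0) by lra.
    apply Rmult_integral in H2. destruct H2. pose proof (pow_half_pos m). lra. lra.
Qed.

Theorem mainTheorem7 (X : BanachSpace) (a : R) (phi : X -> R) :
  separable X ->
  (forall x : X, a <= phi x) ->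
  continuous_on_X phi ->
  convex_fun phi ->
  not_constant_on_lines phi ->
  essentially_directionally_coercive phi.
Proof.
  intros [d Hd] Hlow Hcont Hc Hnc.
  assert (HS : forall m, exists p : (X -> R) * R, 0 <= snd p /\
    (forall u w, fst p (bs_add u w) = fst p u + fst p w) /\
    (forall a w, fst p (bs_scal a w) = a * fst p w) /\
    (forall w, Rabs (fst p w) <= snd p * bs_norm w) /\
    (forall w, phi (d m) + fst p w <= phi (bs_add (d m) w))).
  { intros m. destruct (subgrad d phi (d m) Hd Hc Hcont) as [xi [L H]]. exists (xi, L). exact H. }
  set (F := fun m => proj1_sig (constructive_indefinite_description _ (HS m))).
  assert (HF : forall m, 0 <= snd (F m) /\
    (forall u w, fst (F m) (bs_add u w) = fst (F m) u + fst (F m) w) /\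
    (forall a w, fst (F m) (bs_scal a w) = a * fst (F m) w) /\
    (forall w, Rabs (fst (F m) w) <= snd (F m) * bs_norm w) /\
    (forall w, phi (d m) + fst (F m) w <= phi (bs_add (d m) w))).
  { intros m. unfold F. destruct (constructive_indefinite_description _ (HS m)) as [p Hp]. exact Hp. }
  set (xs := fun m => fst (F m)). set (Ls := fun m => snd (F m)).
  set (e := fun m => / (1 + Ls m)).
  assert (He : forall m, 0 < e m <= 1 /\ e m * Ls m <= 1).
  { intros m. destruct (HF m) as [HL _]. fold (Ls m) in HL. unfold e.
    assert (0 < / (1 + Ls m)) by (apply Rinv_0_lt_compat; lra).
    split; [split|]; auto.
    - rewrite <- Rinv_1 at 2. apply Rinv_le_contravar; lra.
    - apply (Rmult_le_reg_l (1 + Ls m)); [lra|]. rewrite <- Rmult_assoc, Rinv_r by lra. lra. }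
  set (eta := fun m w => (1 - e m) * xs 0%nat w + e m * xs m w).
  set (K := Ls 0%nat + 1).
  assert (HK : 0 <= K) by (unfold K; destruct (HF 0%nat) as [HL _]; fold (Ls 0%nat) in HL; lra).
  assert (Hea : forall m u w, eta m (bs_add u w) = eta m u + eta m w).
  { intros m u w. unfold eta, xs. destruct (HF 0%nat) as [_ [A0 _]]. destruct (HF m) as [_ [Am _]].
    rewrite A0, Am. ring. }
  assert (Heh : forall m a w, eta m (bs_scal a w) = a * eta m w).
  { intros m a' w. unfold eta, xs. destruct (HF 0%nat) as [_ [_ [A0 _]]]. destruct (HF m) as [_ [_ [Am _]]].
    rewrite A0, Am. ring. }
  assert (Heb : forall m w, Rabs (eta m w) <= K * bs_norm w).
  { intros m w. unfold eta, K.
    destruct (HF 0%nat) as [_ [_ [_ [B0 _]]]]. destruct (HF m) as [_ [_ [_ [Bm _]]]].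
    fold (xs 0%nat) (Ls 0%nat) in B0. fold (xs m) (Ls m) in Bm.
    destruct (He m) as [[He1 He2] He3]. pose proof (norm_ge0 w).
    eapply Rle_trans. apply Rabs_triang. rewrite !Rabs_mult, (Rabs_right (1 - e m)), (Rabs_right (e m)) by lra.
    specialize (B0 w). specialize (Bm w).
    assert ((1 - e m) * Rabs (xs 0%nat w) <= Ls 0%nat * bs_norm w).
    { destruct (HF 0%nat) as [HL _]. fold (Ls 0%nat) in HL.
      assert (0 <= Rabs (xs 0%nat w)) by apply Rabs_pos. nra. }
    assert (e m * Rabs (xs m w) <= bs_norm w).
    { apply Rle_trans with (e m * (Ls m * bs_norm w)). apply Rmult_le_compat_l; lra.
      rewrite <- Rmult_assoc. destruct (HF m) as [HL _]. nra. }
    lra. }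
  destruct (xsum_props eta K HK Hea Heh Heb) as [Xa [Xh [Xb Xs]]].
  exists (xsum eta). split.
  { split; [|split]; auto.
    intros x eps Heps. exists (eps / (K + 1)). split. apply Rdiv_lt_0_compat; lra.
    intros y Hy. unfold bs_sub in Hy. rewrite opp_scal in Hy.
    pose proof (Xb (bs_add y (bs_scal (-1) x))). rewrite Xa, Xh in H.
    replace (xsum eta y - xsum eta x) with (xsum eta y + -1 * xsum eta x) by ring.
    eapply Rle_lt_trans. apply H.
    pose proof (norm_ge0 (bs_add y (bs_scal (-1) x))).
    apply Rle_lt_trans with ((K + 1) * bs_norm (bs_add y (bs_scal (-1) x))). nra.
    apply (Rmult_lt_compat_l (K + 1)) in Hy; [|lra].
    replace ((K + 1) * (eps / (K + 1))) with eps in Hy by (field; lra). lra. }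
  intros x v Hv.
  set (s := xsum eta v).
  set (h := fun t => phi (bs_add x (bs_scal t v)) - xsum eta (bs_add x (bs_scal t v))).
  assert (Hh : forall t, h t = phi (bs_add x (bs_scal t v)) - xsum eta x - t * s).
  { intros t. unfold h. rewrite Xa, Xh. fold s. ring. }
  destruct (classic (tends_to_infty h)) as [T|NT]; auto. exfalso.
  assert (Hdec : forall p q, p < q -> h q <= h p).
  { intros p q Hpq. destruct (Rle_or_lt (h q) (h p)) as [G|G]; auto. exfalso. apply NT.
    apply (tends_of_incr h p q); auto.
    intros p' q' l Hl. rewrite !Hh. pose proof (line_convex phi x v p' q' l Hc Hl). nra. }
  assert (Hx : forall tau, 0 <= tau -> phi (bs_add x (bs_scal tau v)) - tau * s <= phi x).
  { intros tau Htau. destruct (Req_dec tau 0) as [E|E].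
    - subst. rewrite scal0, bs_add0. lra.
    - pose proof (Hdec 0 tau ltac:(lra)). rewrite !Hh in H. rewrite scal0, bs_add0 in H. lra. }
  assert (Htr : forall y t, 0 <= t -> phi (bs_add y (bs_scal t v)) <= phi y + t * s).
  { intros y t Ht. apply (transfer phi x v y s t Hc Hcont Hx Ht). }
  assert (Hsg : forall m w, phi (d m) + xs m w <= phi (bs_add (d m) w)).
  { intros m. destruct (HF m) as [_ [_ [_ [_ G]]]]. exact G. }
  assert (Hxm : forall m, xs m v <= s).
  { intros m. pose proof (Hsg m v). pose proof (Htr (d m) 1 ltac:(lra)). rewrite bs_scal1 in H0. lra. }
  assert (Hetam : forall m, eta m v <= s).
  { intros m. unfold eta. destruct (He m) as [[He1 He2] _].
    pose proof (Hxm 0%nat). pose proof (Hxm m). nra. }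
  pose proof (Xs v s Hetam eq_refl) as Heq.
  assert (Hxe : forall m, xs m v = s).
  { intros m. apply Rle_antisym; auto. specialize (Heq m). unfold eta in Heq.
    destruct (He m) as [[He1 He2] _]. pose proof (Hxm 0%nat).
    assert (e m * xs m v >= e m * s) by nra.
    apply Rge_le in H0. apply (Rmult_le_reg_l (e m)); lra. }
  assert (Hline : forall m t, 0 <= t -> phi (bs_add (d m) (bs_scal t v)) = phi (d m) + t * s).
  { intros m t Ht. apply Rle_antisym; auto.
    pose proof (Hsg m (bs_scal t v)). destruct (HF m) as [_ [_ [G _]]]. fold (xs m) in G.
    rewrite G, Hxe in H. lra. }
  pose proof (density_eq phi d v s Hd Hcont Hline) as Hall.
  assert (Hfull : forall t, phi (bs_add x (bs_scal t v)) = phi x + t * s).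
  { intros t. destruct (Rle_or_lt 0 t) as [Ht|Ht]; auto.
    pose proof (Hall (bs_add x (bs_scal t v)) (- t) ltac:(lra)).
    replace (bs_add (bs_add x (bs_scal t v)) (bs_scal (- t) v)) with x in H by (vec (x :: v :: nil); ring).
    lra. }
  assert (Hs0 : s = 0).
  { destruct (Req_dec s 0) as [E|E]; auto. exfalso.
    pose proof (Hfull ((a - phi x - 1) / s)). pose proof (Hlow (bs_add x (bs_scal ((a - phi x - 1) / s) v))).
    replace ((a - phi x - 1) / s * s) with (a - phi x - 1) in H by (field; auto). lra. }
  apply Hnc. exists x, v. split; auto. intros t1 t2. rewrite !Hfull, Hs0. ring.
Qed.
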